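(* Let $G$ and $N$ be finite groups of the same order such that $\mathcal{E}'(G,N)$ is non-empty. Let $\mathcal{M}(N)=\{|M|: M \text{ is a characteristic subgroup of } N\}$ and $\mathcal{H}(G)=\{|H|: H \text{ is a subgroup of } G\}$. Then $\mathcal{M}(N)\subseteq\mathcal{H}(G)$. Also, $G$ has a solvable subgroup whose order equals $|\mathrm{Fit}(N)|$.
   Context: $\mathrm{Fit}(N)$ is the Fitting subgroup of $N$, the unique largest normal nilpotent subgroup of $N$. For a finite group $N$, let $\mathrm{Perm}(N)$ be the group of all permutations of the set $N$. A subgroup $\mathcal{G}\le \mathrm{Perm}(N)$ is regular if the map $\mathcal{G}\to N$, $\sigma\mapsto\sigma(1_N)$, is bijective. Let $\rho:N\to\mathrm{Perm}(N)$, $\rho(\eta)(x)=x\eta^{-1}$. The holomorph of $N$ is $\mathrm{Hol}(N)=\rho(N)\rtimes\mathrm{Aut}(N)\le\mathrm{Perm}(N)$. For a group $G$ with $|G|=|N|$, $\mathcal{E}'(G,N)$ denotes the set of regular subgroups of $\mathrm{Hol}(N)$ isomorphic to $G$. *)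

(* Defs.v *)
From HB Require Import structures.
From mathcomp Require Import all_boot all_fingroup all_solvable.
Set Implicit Arguments. Unset Strict Implicit. Unset Printing Implicit Defensive.
Import GroupScope.

(* A finite group N is represented by the full finGroupType nT (N = [set: nT]);
   Perm(N) = {perm nT}. *)

Definition rho_perm (nT : finGroupType) (eta : nT) : {perm nT} :=
  perm (mulIg eta^-1).

Definition Hol (nT : finGroupType) : {set {perm nT}} :=
  ((@rho_perm nT @: [set: nT]) * Aut [set: nT])%g.

Definition regular (nT : finGroupType) (S : {set {perm nT}}) : Prop :=
  {in S &, injective (fun s : {perm nT} => s (1 : nT))} /\
  [set (s : {perm nT}) (1 : nT) | s in S] = [set: nT].

Definition Eprime_nonempty (gT nT : finGroupType) : Prop :=
  exists S : {group {perm nT}},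
    [/\ S \subset Hol nT, regular S & [set: gT] \isog S].

(* Main.v *)
Require Import Defs.
From mathcomp Require Import all_boot all_fingroup all_solvable.
From mathcomp Require integral_char.
Import GroupScope.

Lemma hall_mulG gT (G H K : {group gT}) (p s : nat) : p != s ->
  p^'.-Hall(G) H -> s^'.-Hall(G) K -> K * H = G.
Proof.
move=> nps hH hK.
have [sHG _ iH] := and3P hH; have [sKG _ iK] := and3P hK.
rewrite pnatNK in iH; rewrite pnatNK in iK.
apply: coprime_index_mulG => //; apply: (pnat_coprime iK).
apply: sub_in_pnat iH => q _ Hq.
have /eqnP -> : q == p by exact: Hq.
by rewrite !inE.
Qed.

Lemma hallI gT (G H K : {group gT}) (p s : nat) : p != s ->
  p^'.-Hall(G) H -> s^'.-Hall(G) K -> s^'.-Hall(H) (H :&: K).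
Proof.
move=> nps hH hK.
have defG := hall_mulG _ _ _ _ _ _ nps hH hK.
have [sKG s'K iK] := and3P hK.
by rewrite /pHall subsetIl (pgroupS (subsetIr _ _) s'K) /= indexgI -indexMg defG.
Qed.

Lemma hall_sol_n n : forall gT (G : {group gT}), #|G| < n ->
  (forall p, prime p -> exists H : {group gT}, p^'.-Hall(G) H) -> solvable G.
Proof.
elim: n => // n IH gT G ltGn hyp; rewrite ltnS in ltGn.
have [le2|gt2] := leqP (size (primes #|G|)) 2.
  exact: integral_char.Burnside_p_a_q_b.
have subsol : forall p (H : {group gT}), prime p -> p %| #|G| ->
    p^'.-Hall(G) H -> solvable H.
  move=> p H pp pG hH; apply: (IH gT H).
    rewrite (card_Hall hH); apply: leq_trans ltGn.
    have := partnC p (cardG_gt0 G) => {2}<-.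
    apply: ltn_Pmull; last exact: part_gt0.
    by rewrite p_part_gt1 mem_primes pp cardG_gt0.
  move=> s ps; have [->|nsp] := eqVneq s p.
    exists H; rewrite pHallE subxx /= part_pnat_id //; exact: (pHall_pgroup hH).
  have [K hK] := hyp s ps; exists (H :&: K)%G.
  have nps : p != s by rewrite eq_sym.
  exact: (hallI _ _ _ _ p s nps hH hK).
have [p [q [r [[pp pG] [qp qG] [rp rG] [npq npr nqr]]]]] :
    exists p q r, [/\ prime p /\ p %| #|G|, prime q /\ q %| #|G|,
       prime r /\ r %| #|G| & [/\ p != q, p != r & q != r]].
  have mP := fun x => mem_primes x #|G|.
  move: gt2 (primes_uniq #|G|) mP.
  case: (primes #|G|) => [|p [|q [|r ps]]] //= _.
  rewrite !inE !negb_or => /and3P[/and3P[npq npr _] /andP[nqr _] _] mP.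
  have := mP p; have := mP q; have := mP r.
  rewrite !inE !eqxx !orbT /= => /esym/and3P[? _ ?] /esym/and3P[? _ ?] /esym/and3P[? _ ?].
  by exists p, q, r.
have [Hp hHp] := hyp p pp.
have solHp := subsol p Hp pp pG hHp.
have ntHp : Hp :!=: 1.
  apply/eqP => Hp1; have [_ _ iHp] := and3P hHp.
  rewrite Hp1 indexg1 pnatNK in iHp.
  have := pnatPpi iHp (_ : q \in \pi(#|G|)).
  rewrite !inE mem_primes qp cardG_gt0 qG => /(_ isT) /eqnP qp'.
  by rewrite qp' eqxx in npq.
have [N [sNHp nNHp ntN abN]] := solvable_norm_abelem solHp (normal_refl Hp) ntHp.
set s := pdiv #|N| in abN.
have sN : s.-group N := abelem_pgroup abN.
have [t [tp tG ntp nts]] : exists t, [/\ prime t, t %| #|G|, p != t & s != t].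
  have [qs|nqs] := eqVneq q s.
    by exists r; split=> //; rewrite -qs.
  by exists q; split=> //; rewrite eq_sym.
have [Ht hHt] := hyp t tp.
have solHt := subsol t Ht tp tG hHt.
have hL := hallI _ _ _ _ p t ntp hHp hHt.
have sNL : N \subset Hp :&: Ht.
  apply: subset_trans (pcore_sub_Hall hL).
  apply: pcore_max => //.
  apply: sub_pgroup sN => x; rewrite !inE => /eqnP ->.
  by [].
have sNHt : N \subset Ht := subset_trans sNL (subsetIr _ _).
have ntp' : t != p by rewrite eq_sym.
have defG : Hp * Ht = G := hall_mulG _ _ _ _ _ _ ntp' hHt hHp.
have sHpG := pHall_sub hHp.
have sNG : N \subset G := subset_trans sNHp sHpG.
set M := <<class_support N G>>.
have sMHt : M \subset Ht.
  rewrite gen_subG; apply/subsetP => x /imset2P[y g Ny Gg ->].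
  move: Gg; rewrite -defG => /mulsgP[a b Ha Hb ->].
  rewrite conjgM groupJ //; apply: (subsetP sNHt).
  by rewrite memJ_norm // (subsetP (normal_norm nNHp)).
have nMG : M <| G.
  rewrite /normal gen_subG class_support_subG //=.
  by apply: norms_gen; apply: class_support_norm.
have ntM : (M :!=: 1)%g.
  apply: contraNneq ntN => M1; apply/eqP/trivgP; rewrite -M1.
  exact: subset_trans (sub_class_support _ _) (subset_gen _).
rewrite (series_sol nMG) (solvableS sMHt solHt) /=.
apply: (IH _ (G / M)%G).
  exact: leq_trans (ltn_quotient ntM (normal_sub nMG)) ltGn.
move=> x xp; have [K hK] := hyp x xp; exists (K / M)%G.
exact: quotient_pHall (subset_trans (pHall_sub hK) (normal_norm nMG)) hK.
Qed.

Lemma hall_sol gT (G : {group gT}) :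
  (forall p, prime p -> exists H : {group gT}, p^'.-Hall(G) H) -> solvable G.
Proof. exact: (hall_sol_n #|G|.+1). Qed.

Lemma hol_char (nT : finGroupType) (M : {group nT}) (s : {perm nT}) (m : nT) :
  M \char [set: nT] -> s \in Hol nT -> s 1 \in M -> m \in M -> s m \in M.
Proof.
move=> chM /mulsgP[r a /imsetP[eta _ ->] Aa ->] s1 Mm.
rewrite permM /rho_perm permE in s1; rewrite permM permE.
have aM := Aut_morphic Aa.
rewrite (morphicP aM) ?inE // in s1 *.
have a1 : a 1 = 1 by rewrite -(autmE Aa) morph1.
rewrite a1 mul1g in s1; rewrite (morphicP aM) ?inE // groupM //.
have /andP[_ /forall_inP cf] := chM.
by apply: (subsetP (cf a Aa)); apply: imset_f.
Qed.

Lemma mem_HM (nT : finGroupType) (M : {group nT}) (S : {group {perm nT}}) s :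
  M \char [set: nT] -> S \subset Hol nT ->
  (s \in S :&: 'N(M | 'P)) = (s \in S) && (s 1 \in M).
Proof.
move=> chM sSH; rewrite inE; case Ss: (s \in S) => //=.
apply/idP/idP.
  rewrite /astabs !inE => /subsetP /(_ 1 (group1 _)); rewrite inE; exact.
move=> s1; rewrite /astabs !inE; apply/subsetP => x Mx.
rewrite inE /=; exact: hol_char chM (subsetP sSH _ Ss) s1 Mx.
Qed.

Lemma card_HM (nT : finGroupType) (M : {group nT}) (S : {group {perm nT}}) :
  M \char [set: nT] -> S \subset Hol nT -> regular S ->
  #|S :&: 'N(M | 'P)| = #|M|.
Proof.
move=> chM sSH [injS imS].
rewrite -(card_in_imset (f := fun s : {perm nT} => s 1)); last first.
  by move=> x y /setIP[Sx _] /setIP[Sy _]; apply: injS.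
apply: eq_card => m; apply/imsetP/idP.
  by case=> s; rewrite mem_HM // => /andP[_ ?] ->.
move=> Mm; have : m \in [set: nT] by rewrite inE.
rewrite -imS => /imsetP[s Ss Em]; exists s => //.
by rewrite mem_HM // Ss -Em.
Qed.

Theorem proposition6p1 (gT nT : finGroupType) :
  #|gT| = #|nT| ->
  Eprime_nonempty gT nT ->
  (forall M : {group nT}, M \char [set: nT] ->
     exists H : {group gT}, #|H| = #|M|) /\
  (exists H : {group gT}, solvable H /\ #|H| = #|'F([set: nT])|).
Proof.
move=> _ [S [sSH regS isoGS]].
have [f injf fS] := isogP (isog_symr isoGS).
split.
  move=> M chM; exists (f @* (S :&: 'N(M | 'P)))%G.
  by rewrite card_injm ?subsetIl // card_HM.
have chF : 'F([set: nT]) \char [set: nT] := Fitting_char _.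
exists (f @* (S :&: 'N('F([set: nT]) | 'P)))%G; split; last first.
  by rewrite card_injm ?subsetIl // card_HM.
apply: morphim_sol; apply: hall_sol => p pp.
have chO : 'O_p^'('F([set: nT])) \char [set: nT] :=
  char_trans (pcore_char _ _) chF.
exists (S :&: 'N('O_p^'('F([set: nT])) | 'P))%G.
rewrite pHallE; apply/andP; split.
  apply/subsetP => s; rewrite !mem_HM // => /andP[-> /(subsetP (pcore_sub _ _))].
  by [].
rewrite !card_HM //.
by rewrite (card_Hall (nilpotent_pcore_Hall _ (Fitting_nil _))).
Qed.
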